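(* Fix $\alpha\in(0,1)$, a number of agents $M$, a measurable score $V:\mathcal X\times\mathcal Y\to\mathbb R$ and a test distribution $P_{\mathrm{test}}$ on $\mathcal X\times\mathcal Y$ such that the CDF $G(v)=P_{\mathrm{test}}(V(X,Y)\le v)$ is continuous. Consider a sequence of settings indexed by $t=1,2,\dots$: in setting $t$, agent $k$ has calibration sample size $n_{k,t}$ and calibration distribution $P^{\mathrm{cal}}_{k,t}$, the calibration samples are independent across agents and i.i.d. within each agent, and $\widehat q_t=\sum_k\frac{n_{k,t}}{N_t}\widehat q_{k,t}$ and $\widehat q_{\mathrm{mix},t}=\widehat F_{\mathrm{mix},t}^{-1}(1-\alpha)$ are the aggregated threshold and the empirical mixture quantile. Assume that as $t\to\infty$: $n_{k,t}\to\infty$ for every $k$; $\sup_k d_{\mathrm{TV}}(P^{\mathrm{cal}}_{k,t},P_{\mathrm{test}})\to0$; and $|\widehat q_t-\widehat q_{\mathrm{mix},t}|\to0$ in probability. Then \[ \Big|\mathbb P\big(Y\in C_{\widehat q_t}(X)\big)-(1-\alpha)\Big|\to0, \] where $(X,Y)\sim P_{\mathrm{test}}$ is independent of the calibration data.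
   Context: For $q\in\mathbb R$, $C_q(x)=\{y: V(x,y)\le q\}$. In setting $t$, agent $k$'s calibration scores are $V_{k,i}=V(x_{k,i},y_{k,i})$, $i=1,\dots,n_{k,t}$; $N_t=\sum_k n_{k,t}$; the local threshold $\widehat q_{k,t}$ is the $\lceil (n_{k,t}+1)(1-\alpha)\rceil$-th smallest score of agent $k$ (defined once $n_{k,t}$ is large enough that this index is at most $n_{k,t}$); $\widehat F_{k,t}(v)=\frac1{n_{k,t}}\sum_i\mathbf 1\{V_{k,i}\le v\}$, $\widehat F_{\mathrm{mix},t}=\sum_k\frac{n_{k,t}}{N_t}\widehat F_{k,t}$, and $F^{-1}(p)=\inf\{v: F(v)\ge p\}$. $d_{\mathrm{TV}}(P,Q)=\sup_A|P(A)-Q(A)|$. (The paper's regime has the Dirichlet concentration parameter of the calibration partition tending to infinity, which is what drives the total variation distances to zero.) *)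

(* Defs.v *)
From HB Require Import structures.
From mathcomp Require Import all_boot all_order all_algebra.
From mathcomp Require Import all_classical all_reals all_analysis.
Set Implicit Arguments. Unset Strict Implicit. Unset Printing Implicit Defensive.
Import Order.TTheory GRing.Theory Num.Theory.
Local Open Scope classical_set_scope.
Local Open Scope ring_scope.

Definition Cset {X Y : Type} {R : realType} (V : X * Y -> R) (q : R) (x : X)
  : set Y := [set y | V (x, y) <= q].

Definition dTV {d} {T : measurableType d} {R : realType}
  (P Q : probability T R) : \bar R :=
  ereal_sup [set `|(P A - Q A)%E|%E | A in [set A : set T | measurable A]].

Definition qidx {R : realType} (alpha : R) (n : nat) : nat :=
  `|Num.ceil ((n.+1)%:R * (1 - alpha))|%N.

Definition order_stat {R : realType} (s : seq R) (j : nat) : R :=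
  nth 0 (sort <=%R s) j.-1.

Definition qlocal {R : realType} (alpha : R) (s : seq R) : R :=
  order_stat s (qidx alpha (size s)).

Definition ecdf {R : realType} (s : seq R) (v : R) : R :=
  (count (fun x => x <= v) s)%:R / (size s)%:R.

Definition ginv {R : realType} (F : R -> R) (p : R) : R :=
  inf [set v | p <= F v].

Definition mutually_independent {d} {Omega : measurableType d} {R : realType}
  (P : probability Omega R) {I : eqType} {dT} {T : measurableType dT}
  (Z : I -> Omega -> T) (S : set I) : Prop :=
  forall (J : seq I), uniq J -> (forall j, j \in J -> S j) ->
  forall (B : I -> set T), (forall j, measurable (B j)) ->
  P (\bigcap_(j in [set j | j \in J]) (Z j @^-1` B j)) =
  (\prod_(j <- J) P (Z j @^-1` B j))%E.

Definition Ntot {R : realType} {M : nat} (s : 'I_M -> seq R) : R :=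
  \sum_(k < M) (size (s k))%:R.

Definition agg_threshold {R : realType} {M : nat} (alpha : R)
  (s : 'I_M -> seq R) : R :=
  \sum_(k < M) ((size (s k))%:R / Ntot s) * qlocal alpha (s k).

Definition mix_ecdf {R : realType} {M : nat} (s : 'I_M -> seq R) (v : R) : R :=
  \sum_(k < M) ((size (s k))%:R / Ntot s) * ecdf (s k) v.

Definition mix_quantile {R : realType} {M : nat} (alpha : R)
  (s : 'I_M -> seq R) : R :=
  ginv (mix_ecdf s) (1 - alpha).

(* Main.v *)
Require Import Defs.
From HB Require Import structures.
From mathcomp Require Import all_boot all_order all_algebra.
From mathcomp Require Import all_classical all_reals all_analysis.
From mathcomp Require Import ring lra.
Set Implicit Arguments. Unset Strict Implicit. Unset Printing Implicit Defensive.
Import Order.TTheory GRing.Theory Num.Theory.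
Import numFieldNormedType.Exports.
Local Open Scope classical_set_scope.
Local Open Scope ring_scope.

Section S. Context {R : realType}.
Lemma sorted_nth_le (s : seq R) m v : sorted <=%R s -> (m < size s)%N ->
  (nth 0 s m <= v) = (m < count (fun x : R => (x <= v)%R) s)%N.
Proof.
elim: s m => [//|x s IH] m /= Hs Hm.
have Hs' : sorted <=%R s := path_sorted Hs.
have Hx : all (fun y => x <= y) s.
  by apply: (order_path_min (@le_trans _ _)).
have [xv|vx] := leP x v.
  case: m Hm => [|m] Hm /=; first by rewrite xv.
  by rewrite IH // add1n ltnS.
have c0 : count (fun y => y <= v) s = 0%N.
  apply/eqP; rewrite -leqn0 leqNgt -has_count; apply/hasPn => y ys.
  by move/allP: Hx => /(_ y ys) xy; rewrite -ltNge (lt_le_trans vx).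
rewrite c0 /= ltn0; apply/negbTE; rewrite -ltNge.
case: m Hm => [|m] Hm //=.
have : x <= nth 0 s m by move/allP: Hx; apply; rewrite mem_nth.
move=> h; exact: (lt_le_trans vx h).
Qed.
End S.

Section S3. Context {R : realType}.
Lemma count_le_in (s : seq R) (a1 a2 : pred R) :
  {in s, forall x, a1 x -> a2 x} -> (count a1 s <= count a2 s)%N.
Proof.
elim: s => [//|x s IH] H /=; apply: leq_add; last by apply: IH => y ys; apply: H; rewrite inE ys orbT.
by case: (boolP (a1 x)) => //= h; rewrite (H x) // mem_head.
Qed.

Lemma exists_gap (L : seq R) v : exists2 v', v < v' & forall x, x \in L -> v < x -> v' <= x.
Proof.
elim: L => [|y L [v' vv' H]]; first by exists (v + 1) => //; rewrite ltrDl.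
have [vy|yv] := ltP v y.
  exists (Num.min v' y); first by rewrite lt_min vv' vy.
  move=> x; rewrite inE => /orP[/eqP->|xL] vx; first by rewrite ge_min lexx orbT.
  by rewrite ge_min H.
exists v' => // x; rewrite inE => /orP[/eqP->|xL] vx; last exact: H.
by move: (le_lt_trans yv vx); rewrite ltxx.
Qed.

Lemma exists_ub (L : seq R) : exists B, forall x, x \in L -> x <= B.
Proof.
elim: L => [|y L [B H]]; first by exists 0.
exists (Num.max y B) => x; rewrite inE => /orP[/eqP->|xL]; first by rewrite le_max lexx.
by rewrite le_max H ?orbT.
Qed.

Lemma exists_lb (L : seq R) : exists B, forall x, x \in L -> B <= x.
Proof.
elim: L => [|y L [B H]]; first by exists 0.
exists (Num.min y B) => x; rewrite inE => /orP[/eqP->|xL]; first by rewrite ge_min lexx.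
by rewrite ge_min H ?orbT.
Qed.

Variables (M : nat) (s : 'I_M -> seq R) (alpha : R).
Hypothesis hs : forall k, (0 < size (s k))%N.
Hypothesis hM : (0 < M)%N.
Hypothesis ha : 0 < alpha < 1.
Lemma Ntot_gt0 : 0 < Ntot s.
Proof.
rewrite /Ntot (bigD1 (Ordinal hM)) //= ltr_pwDl ?sumr_ge0 // ltr0n; exact: hs.
Qed.

Lemma mix_ecdfE u : mix_ecdf s u =
  (\sum_(k < M) (count (fun x : R => (x <= u)%R) (s k))%:R) / Ntot s.
Proof.
rewrite /mix_ecdf mulr_suml; apply: eq_bigr => k _; rewrite /ecdf.
have h : (size (s k))%:R != 0 :> R by rewrite pnatr_eq0 -lt0n hs.
by rewrite mulrC mulrA mulfVK.
Qed.

Let L := flatten [seq s k | k <- enum 'I_M].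
Let memL k x : x \in s k -> x \in L.
Proof. by move=> xs; apply/flatten_mapP; exists k => //; rewrite mem_enum. Qed.

Lemma mix_ecdf_le u u' : (forall k x, x \in s k -> x <= u -> x <= u') ->
  mix_ecdf s u <= mix_ecdf s u'.
Proof.
move=> H; rewrite !mix_ecdfE ler_pM2r ?invr_gt0 ?Ntot_gt0 //.
apply: ler_sum => k _; rewrite ler_nat; apply: count_le_in => x xs; exact: (H k x xs).
Qed.

Lemma mix_ecdf_mono u u' : u <= u' -> mix_ecdf s u <= mix_ecdf s u'.
Proof. by move=> uu'; apply: mix_ecdf_le => k x _ xu; exact: le_trans uu'. Qed.

Lemma mix_ecdf_big u : (forall k x, x \in s k -> x <= u) -> mix_ecdf s u = 1.
Proof.
move=> H; rewrite mix_ecdfE.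
have -> : \sum_(k < M) (count (fun x : R => x <= u) (s k))%:R = Ntot s.
  apply: eq_bigr => k _; congr (_%:R); rewrite -[RHS]count_predT.
  by apply: eq_in_count => x xs; rewrite /= (H k x xs).
by rewrite divff // gt_eqF // Ntot_gt0.
Qed.

Lemma mix_ecdf_small u : (forall k x, x \in s k -> u < x) -> mix_ecdf s u = 0.
Proof.
move=> H; rewrite mix_ecdfE big1 ?mul0r // => k _.
suff -> : count (fun x : R => x <= u) (s k) = 0%N by [].
apply/eqP; rewrite -leqn0 leqNgt -has_count; apply/hasPn => x xs /=.
by rewrite -ltNge (H k x xs).
Qed.

Let S := [set v | 1 - alpha <= mix_ecdf s v].

Let S_lb : exists lb, lbound S lb.
Proof.
have [lb Hlb] := exists_lb L; exists (lb - 1) => u Su; rewrite leNgt; apply/negP => ulb.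
have : mix_ecdf s u = 0.
  apply: mix_ecdf_small => k x xs; apply: (lt_le_trans ulb).
  by apply: le_trans (Hlb x (memL xs)); rewrite lerBlDr lerDl.
move: Su; rewrite /S /= => + e; rewrite e subr_le0 leNgt; case/andP: ha => _ ->.
by [].
Qed.

Let S_ne : S !=set0.
Proof.
have [B HB] := exists_ub L; exists B; rewrite /S /= mix_ecdf_big.
  by rewrite lerBlDr lerDl; case/andP: ha => /ltW.
by move=> k x xs; exact: HB (memL xs).
Qed.

Lemma mix_quantile_le v : (mix_quantile alpha s <= v) = (1 - alpha <= mix_ecdf s v).
Proof.
have hlb : has_lbound S by case: S_lb => lb h; exists lb.
apply/idP/idP; last first.
  by move=> Sv; rewrite /mix_quantile /ginv; apply: ge_inf.
apply: contraTT; rewrite -!ltNge => Fv.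
have [v' vv' Hv'] := exists_gap L v.
apply: (lt_le_trans vv'); rewrite /mix_quantile /ginv; apply: lb_le_inf => //.
move=> u Su; rewrite leNgt; apply/negP => uv'.
have : mix_ecdf s u <= mix_ecdf s v.
  apply: mix_ecdf_le => k x xs xu; rewrite leNgt; apply/negP => vx.
  by move: (lt_le_trans uv' (Hv' x (memL xs) vx)); rewrite ltNge xu.
by rewrite leNgt (lt_le_trans Fv Su).
Qed.
End S3.

Section S4. Context {R : realType}.
Lemma order_stat_le (s : seq R) j v : (j.-1 < size s)%N ->
  (order_stat s j <= v) = (j.-1 < count (fun x : R => (x <= v)%R) s)%N.
Proof.
move=> hj; rewrite /order_stat sorted_nth_le ?size_sort ?count_sort //.
exact: (sort_sorted (@le_total _ R)).
Qed.

Lemma order_stat_out (s : seq R) j : (size s <= j.-1)%N -> order_stat s j = 0.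
Proof. by move=> hj; rewrite /order_stat nth_default // size_sort. Qed.

Lemma count_sumR (T : Type) (p : pred T) (s : seq T) :
  (count p s)%:R = \sum_(x <- s) (p x)%:R :> R.
Proof. by elim: s => [|x s IH]; rewrite ?big_nil ?big_cons //= natrD IH. Qed.

Context d (Om : measurableType d).

Lemma mfun_le (f : Om -> R) : (forall v, measurable [set w | f w <= v]) ->
  measurable_fun setT f.
Proof.
move=> H; apply: (measurability _ (measurable_realfun.RGenOInfty.measurableE R)) => //.
move=> _ [_ [x ->] <-]; rewrite setTI.
have -> : f @^-1` `]x, +oo[ = ~` [set w | f w <= x].
  by apply/seteqP; split => w /=; rewrite in_itv /= andbT ltNge => /negP.
exact: measurableC.
Qed.

Lemma mindic_le (f : Om -> R) v : measurable_fun setT f ->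
  measurable_fun setT (fun w => ((f w <= v)%R)%:R : R).
Proof.
move=> mf.
have mA : measurable [set w | f w <= v].
  have -> : [set w | f w <= v] = f @^-1` `]-oo, v] by apply/seteqP; split => w /=; rewrite in_itv.
  by rewrite -[X in measurable X]setTI; apply: mf.
apply: (@eq_measurable_fun _ _ _ _ setT (\1_[set w | f w <= v] : Om -> R)) => [w _|]; last exact: measurable_realfun.measurable_indic.
by rewrite indicE; case: (boolP (f w <= v)) => h; [rewrite mem_set|rewrite memNset //=; apply/negP].
Qed.

Lemma mcount (f : nat -> Om -> R) (l : seq nat) v :
  (forall i, measurable_fun setT (f i)) ->
  measurable_fun setT (fun w => (count (fun x : R => x <= v) [seq f i w | i <- l])%:R : R).
Proof.
move=> mf; apply: (@eq_measurable_fun _ _ _ _ setT (fun w => \sum_(i <- l) ((f i w <= v)%R)%:R : R)).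
  by move=> w _; rewrite count_map count_sumR.
by apply: measurable_sum => i; exact: mindic_le.
Qed.

Lemma morder_stat (f : nat -> Om -> R) (l : seq nat) j :
  (forall i, measurable_fun setT (f i)) ->
  measurable_fun setT (fun w => order_stat [seq f i w | i <- l] j).
Proof.
move=> mf; have [hj|hj] := ltnP j.-1 (size l); last first.
  apply: (@eq_measurable_fun _ _ _ _ setT (cst (0:R))) => [w _|//].
  by rewrite order_stat_out // size_map.
apply: mfun_le => v.
have -> : [set w | order_stat [seq f i w | i <- l] j <= v] =
  [set w | (j.-1.+1)%:R <= (count (fun x : R => x <= v) [seq f i w | i <- l])%:R :> R].
  by apply/seteqP; split => w /=; rewrite order_stat_le ?size_map // ler_nat.
have h := measurable_realfun.measurable_fun_ler (measurable_cst ((j.-1.+1)%:R : R)) (mcount l v mf) measurableT (I : measurable [set true]).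
move: h; congr (measurable _); apply/seteqP; split => w /=.
  by move=> [_ ->].
by move=> h; split.
Qed.
End S4.

Section Cheb.
Context {R : realType} d (Om : measurableType d) (P : probability Om R).

Definition BM (f : Om -> R) := measurable_fun setT f /\ exists C, forall w, `|f w| <= C.

Lemma BM_int f : BM f -> P.-integrable setT (EFin \o f).
Proof.
move=> [mf [C hC]]; apply: measurable_bounded_integrable => //.
  by apply: (le_lt_trans (probability_le1 P measurableT)); rewrite ltry.
exists C; split; first exact: num_real.
by move=> M CM x _ /=; exact: le_trans (hC x) (ltW CM).
Qed.

Lemma BM_cst c : BM (cst c).
Proof. by split; [exact: measurable_cst | exists `|c|]. Qed.

Lemma BM_indic A : measurable A -> BM (\1_A).
Proof.
move=> mA; split; first exact: measurable_realfun.measurable_indic.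
by exists 1 => w; rewrite indicE; case: (w \in A); rewrite ?normr1 ?normr0.
Qed.

Lemma BM_add f g : BM f -> BM g -> BM (f \+ g).
Proof.
move=> [mf [C hC]] [mg [D hD]]; split; first exact: measurable_realfun.measurable_funD.
by exists (C + D) => w /=; apply: le_trans (ler_normD _ _) (lerD (hC w) (hD w)).
Qed.

Lemma BM_mul f g : BM f -> BM g -> BM (f \* g).
Proof.
move=> [mf [C hC]] [mg [D hD]]; split; first exact: measurable_realfun.measurable_funM.
exists (C * D) => w /=; rewrite normrM; apply: ler_pM => //.
Qed.

Lemma BM_sum (I : Type) (J : seq I) (f : I -> Om -> R) : (forall i, BM (f i)) ->
  BM (fun w => \sum_(i <- J) f i w).
Proof.
move=> H; elim: J => [|i J IH].
  by rewrite (_ : (fun w => _) = cst 0); [exact: BM_cst | apply/funext => w; rewrite big_nil].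
rewrite (_ : (fun w => _) = f i \+ (fun w => \sum_(i <- J) f i w)); first exact: BM_add.
by apply/funext => w; rewrite big_cons.
Qed.

Lemma fineP01 A : measurable A -> 0 <= fine (P A) <= 1.
Proof.
move=> mA; rewrite fine_ge0 ?measure_ge0 //= -lee_fin fineK ?fin_num_measure //.
exact: probability_le1.
Qed.

Local Notation RI f := (Rintegral P setT f).

Lemma RI_add f g : BM f -> BM g -> RI (f \+ g) = RI f + RI g.
Proof. by move=> hf hg; rewrite /= RintegralD //; exact: BM_int. Qed.

Lemma RI_scale c f : BM f -> RI (fun w => c * f w) = c * RI f.
Proof. by move=> hf; rewrite RintegralZl //; exact: BM_int. Qed.

Lemma RI_cst c : RI (cst c) = c.
Proof. rewrite Rintegral_cst //; have h := probability_setT P; move: h; rewrite /= => ->; by rewrite mulr1. Qed.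

Lemma RI_indic A : measurable A -> RI (\1_A) = fine (P A).
Proof. by move=> mA; rewrite /Rintegral integral_indic // setIT. Qed.

Lemma RI_sum (I : Type) (J : seq I) (f : I -> Om -> R) : (forall i, BM (f i)) ->
  RI (fun w => \sum_(i <- J) f i w) = \sum_(i <- J) RI (f i).
Proof.
move=> H; elim: J => [|i J IH].
  by rewrite big_nil (_ : (fun w => _) = cst 0) ?RI_cst //; apply/funext => w; rewrite big_nil.
rewrite big_cons -IH -RI_add //; last exact: BM_sum.
by congr (Rintegral _ _ _); apply/funext => w; rewrite big_cons.
Qed.

Lemma RI_le f g : BM f -> BM g -> (forall w, f w <= g w) -> RI f <= RI g.
Proof. by move=> hf hg fg; apply: le_Rintegral => //; apply: BM_int. Qed.

Lemma cheb_count (I : eqType) (J : seq I) (E : I -> set Om) (eps : R) :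
  0 < eps -> uniq J -> (forall i, measurable (E i)) ->
  (forall i j, i \in J -> j \in J -> i != j -> P (E i `&` E j) = (P (E i) * P (E j))%E) ->
  fine (P [set w | eps <= `| \sum_(i <- J) \1_(E i) w - \sum_(i <- J) fine (P (E i)) |])
    <= (size J)%:R / eps ^+ 2.
Proof.
move=> e0 uJ mE indep.
pose p i := fine (P (E i)).
pose g i := fun w => \1_(E i) w - p i.
have BMg i : BM (g i) by apply: BM_add; [exact: BM_indic | exact: BM_cst].
pose Y := fun w => \sum_(i <- J) g i w.
have BMY : BM Y by exact: BM_sum.
have YE w : \sum_(i <- J) \1_(E i) w - \sum_(i <- J) fine (P (E i)) = Y w.
  by rewrite /Y /g sumrB.
pose A := [set w | eps <= `|Y w|].
have mA : measurable A.
  have h := measurable_realfun.measurable_fun_ler (measurable_cst eps)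
    (measurableT_comp (@measurable_realfun.normr_measurable R setT) BMY.1) measurableT (Logic.I : measurable [set true]).
  move: h; congr (measurable _); apply/seteqP; split => w /=.
    by move=> [_ h].
  by move=> h; split.
rewrite (_ : [set w | _] = A); last by apply/seteqP; split => w /=; rewrite YE.
have key : eps ^+ 2 * fine (P A) <= RI (fun w => Y w ^+ 2).
  rewrite -RI_indic // -RI_scale; last exact: BM_indic.
  have BY2 : BM (fun w => Y w ^+ 2).
    by rewrite (_ : (fun w => _) = Y \* Y); [exact: BM_mul|apply/funext => w; rewrite expr2].
  apply: RI_le => [|//|w]; first exact: (BM_mul (BM_cst _) (BM_indic mA)).
  rewrite /= indicE; case: (boolP (w \in A)) => h.
    move/set_mem: h => h.
    by rewrite mulr1 -[Y w ^+ 2]real_normK ?num_real // expr2 [X in _ <= X]expr2 ler_pM // ltW.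
  by rewrite mulr0 sqr_ge0.
have pr i : 0 <= p i <= 1.
  by apply: fineP01.
have cross i j : RI (g i \* g j) = fine (P (E i `&` E j)) - p i * p j.
  rewrite (_ : g i \* g j = (\1_(E i `&` E j) \+ (fun w => (- p j) * \1_(E i) w))
      \+ ((fun w => (- p i) * \1_(E j) w) \+ cst (p i * p j))); last first.
    by apply/funext => w; rewrite /g indicI /=; ring.
  have mij : measurable (E i `&` E j) by exact: measurableI.
  have b1 : BM (\1_(E i `&` E j)) by exact: BM_indic.
  have b2 : BM (fun w => (- p j) * \1_(E i) w) by exact: (BM_mul (BM_cst _) (BM_indic (mE i))).
  have b3 : BM (fun w => (- p i) * \1_(E j) w) by exact: (BM_mul (BM_cst _) (BM_indic (mE j))).
  rewrite RI_add; [|exact: BM_add|exact: (BM_add b3 (BM_cst _))].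
  rewrite !RI_add //; last exact: BM_cst.
  rewrite !RI_scale ?RI_cst ?RI_indic //; try exact: BM_indic.
  rewrite /p; ring.
  exact: BM_cst.
have Y2 : (fun w => Y w ^+ 2) = (fun w => \sum_(i <- J) \sum_(j <- J) (g i \* g j) w).
  apply/funext => w; rewrite /Y expr2 mulr_suml; apply: eq_bigr => i _.
  by rewrite mulr_sumr.
have hsum : RI (fun w => Y w ^+ 2) <= (size J)%:R.
  rewrite Y2 RI_sum; last by move=> i; apply: BM_sum => j; exact: BM_mul.
  have -> : (size J)%:R = \sum_(i <- J) (1 : R).
    by rewrite big_const_seq count_predT; elim: (size J) => [|k IH] //=; rewrite -addn1 natrD IH addrC.
  rewrite big_seq [X in _ <= X]big_seq; apply: ler_sum => i iJ.
  rewrite RI_sum; last by move=> j; exact: BM_mul.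
  rewrite (bigD1_seq i) //= big1_seq; last first.
    move=> j /andP[ji jJ]; rewrite cross indep // 1?eq_sym //.
    by rewrite fineM ?fin_num_measure // subrr.
  rewrite cross setIid addr0 -/(p i); have := pr i; nra.
by rewrite ler_pdivlMr ?exprn_gt0 // mulrC (le_trans key hsum).
Qed.
End Cheb.

Section G.
Context {R : realType} d (T : measurableType d) (P : probability T R) (V : T -> R).
Hypothesis mV : measurable_fun setT V.
Let Gf (v : R) := fine (P (V @^-1` `]-oo, v])).

Let XV : {RV P >-> R} := mfun_Sub (mem_set mV : V \in mfun).

Let cdfXV v : cdf XV v = P (V @^-1` `]-oo, v]).
Proof. by []. Qed.

Lemma G_mono u v : u <= v -> Gf u <= Gf v.
Proof.
move=> uv; rewrite /Gf -!cdfXV fine_le ?fin_num_measure //; try exact: measurable_funPTI.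
  by rewrite cdf_nondecreasing.
Qed.

Lemma G_hi (b : R) : b < 1 -> exists v, b < Gf v.
Proof.
move=> b1; have := cvg_cdfy1 XV; move/fine_cvgP => [_ h].
move/cvgrPdist_lt: h => /(_ (1 - b)); rewrite subr_gt0 => /(_ b1) h.
have [v hv] := filter_ex h; exists v; move: hv => /=.
rewrite /Gf -cdfXV => /(le_lt_trans (ler_norm _)) => h'; lra.
Qed.

Lemma G_lo (b : R) : 0 < b -> exists v, Gf v < b.
Proof.
move=> b0; have := cvg_cdfNy0 XV; move/fine_cvgP => [_ h].
move/cvgrPdist_lt: h => /(_ b b0) h.
have [v hv] := filter_ex h; exists v; move: hv => /=.
rewrite /Gf -cdfXV sub0r normrN => /(le_lt_trans (ler_norm _)) => h'; lra.
Qed.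
End G.

Section ab.
Context {R : realType}.
Lemma cont_delta (G : R -> R) x eta : continuous G -> 0 < eta ->
  exists2 del, 0 < del & forall y, `|x - y| < del -> `|G x - G y| < eta.
Proof.
move=> cG e0; have := cG x; move/cvgrPdist_lt => /(_ eta e0).
move/nbhs_ballP => [del d0 H]; exists del => // y xy; exact: H.
Qed.

Lemma pick_a (G : R -> R) (b eps : R) :
  (forall x eta, 0 < eta -> exists2 del, 0 < del & forall y, `|x - y| < del -> `|G x - G y| < eta) ->
  {homo G : x y / x <= y} ->
  (exists v, G v < b) -> (exists v, b < G v) -> 0 < eps ->
  exists a, exists2 e, 0 < e & G a < b /\ b - eps < G (a - e).
Proof.
move=> cG mG [v0 hv0] [v1 hv1] e0.
pose S := [set v | b <= G v].
have Sne : S !=set0 by exists v1; rewrite /S /= ltW.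
have Slb : lbound S v0.
  move=> u Su; rewrite leNgt; apply/negP => uv0.
  have := mG _ _ (ltW uv0); rewrite /S /= in Su; lra.
have hS : has_lbound S by exists v0.
pose c := inf S.
have e2 : 0 < eps / 2 by rewrite divr_gt0.
have [del d0 Hd] := cG c _ e2.
have d2 : 0 < del / 2 by rewrite divr_gt0.
pose a := c - del / 2.
have Ga : G a < b.
  rewrite ltNge; apply/negP => Sa.
  have : c <= a by exact: ge_inf.
  rewrite /a; lra.
have [u Su uc] := inf_adherent d2 (conj Sne hS).
have cu : c <= u by exact: ge_inf.
have Hu : `|G c - G u| < eps / 2 by apply: Hd; rewrite ltr_norml; apply/andP; split; lra.
have Ha : `|G c - G a| < eps / 2 by apply: Hd; rewrite /a ltr_norml; apply/andP; split; lra.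
have Gab : b - eps < G a.
  move: Hu Ha; rewrite /S /= in Su; move=> /ltr_normlP [h1 h2] /ltr_normlP [h3 h4]; lra.
have e3 : 0 < G a - (b - eps) by rewrite subr_gt0.
have [da da0 Hda] := cG a _ e3.
exists a, (da / 2); first by rewrite divr_gt0.
split => //; have := Hda (a - da / 2).
rewrite opprB addrC subrK ger0_norm ?divr_ge0 ?ltW // => /(_ _) h.
have : `|G a - G (a - da / 2)| < G a - (b - eps) by apply: h; lra.
by move/ltr_normlP => [h1 h2]; lra.
Qed.

Lemma pick_b (G : R -> R) (b eps : R) :
  (forall x eta, 0 < eta -> exists2 del, 0 < del & forall y, `|x - y| < del -> `|G x - G y| < eta) ->
  {homo G : x y / x <= y} ->
  (exists v, G v < b) -> (exists v, b < G v) -> 0 < eps ->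
  exists a, exists2 e, 0 < e & b < G a /\ G (a + e) < b + eps.
Proof.
move=> cG mG [v0 hv0] [v1 hv1] e0.
have := @pick_a (fun v => - G (- v)) (- b) eps.
case.
- move=> x eta /(cG (- x)) [del d0 H]; exists del => // y xy.
  rewrite (_ : - G (- x) - - G (- y) = - (G (- x) - G (- y))); last by ring.
  rewrite normrN; apply: H; rewrite (_ : - x - - y = - (x - y)); last by ring.
  by rewrite normrN.
- by move=> x y xy; rewrite lerN2; apply: mG; rewrite lerN2.
- by exists (- v1); rewrite opprK ltrN2.
- by exists (- v0); rewrite opprK ltrN2.
- by [].
move=> a [e e0' [h1 h2]]; exists (- a), e => //; split; first by move: h1; rewrite ltrN2.
by move: h2; rewrite (_ : - (a - e) = - a + e); [lra|ring].
Qed.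
End ab.
Section H2.
Context {R : realType} d (T : measurableType d).
Lemma mset_le (f g : T -> R) : measurable_fun setT f -> measurable_fun setT g ->
  measurable [set w | f w <= g w].
Proof.
move=> mf mg.
have h := measurable_realfun.measurable_fun_ler mf mg measurableT (Logic.I : measurable [set true]).
move: h; congr (measurable _); apply/seteqP; split => w /=.
  by move=> [_ h].
by move=> h; split.
Qed.

Lemma prob_le3 (P : probability T R) (A B C D : set T) :
  measurable A -> measurable B -> measurable C -> measurable D ->
  A `<=` B `|` C `|` D -> fine (P A) <= fine (P B) + fine (P C) + fine (P D).
Proof.
move=> mA mB mC mD H.
rewrite -lee_fin !EFinD !fineK ?fin_num_measure //.
have mBC : measurable (B `|` C) by apply: measurableU.
have mBCD : measurable (B `|` C `|` D) by apply: measurableU.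
apply: (le_trans (le_measure P _ _ H)); rewrite ?inE //.
apply: (le_trans (measureU2 P mBC mD)).
by rewrite leeD2r // measureU2.
Qed.

Lemma prob_le (P : probability T R) (A B : set T) :
  measurable A -> measurable B -> A `<=` B -> fine (P A) <= fine (P B).
Proof.
move=> mA mB H; rewrite -lee_fin !fineK ?fin_num_measure //.
by apply: le_measure; rewrite ?inE.
Qed.
End H2.

Unset Implicit Arguments.
Section Main.
Context (R : realType) (alpha : R) (M : nat)
  (dX dY : measure_display) (X : measurableType dX) (Y : measurableType dY)
  (V : X * Y -> R) (Ptest : probability (X * Y)%type R)
  (dO : measure_display) (Omega : nat -> measurableType dO)
  (P : forall t, probability (Omega t) R)
  (n : 'I_M -> nat -> nat)
  (Pcal : 'I_M -> nat -> probability (X * Y)%type R)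
  (Z : forall t, 'I_M -> nat -> Omega t -> (X * Y)%type)
  (Ztest : forall t, Omega t -> (X * Y)%type).
Hypothesis ha : 0 < alpha < 1.
Hypothesis hM : (0 < M)%N.
Hypothesis mV : measurable_fun setT V.
Hypothesis cGf : continuous (fun v : R => fine (Ptest (V @^-1` `]-oo, v]))).

Hypothesis mZ : forall t k i, measurable_fun setT (Z t k i).
Hypothesis mZt : forall t, measurable_fun setT (Ztest t).
Hypothesis lawZ : forall t k i, (i < n k t)%N -> forall A, measurable A ->
     P t (Z t k i @^-1` A) = Pcal k t A.
Hypothesis lawT : forall t A, measurable A -> P t (Ztest t @^-1` A) = Ptest A.
Hypothesis indep : forall t, mutually_independent (P t)
     (fun j : option ('I_M * nat) =>
        match j with Some ki => Z t ki.1 ki.2 | None => Ztest t end)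
     [set j | match j with Some ki => (ki.2 < n ki.1 t)%N | None => True end].
Hypothesis nInf : forall k (B : nat), \forall t \near \oo, (B <= n k t)%N.
Hypothesis tv : forall e : R, 0 < e -> \forall t \near \oo,
     forall k, (dTV (Pcal k t) Ptest < e%:E)%E.

Let Gf v := fine (Ptest (V @^-1` `]-oo, v])).
Let sc t (w : Omega t) (k : 'I_M) := [seq V (Z t k i w) | i <- iota 0 (n k t)].
Let W t k i (w : Omega t) := V (Z t k i w).
Let mW t k i : measurable_fun setT (W t k i) := measurableT_comp mV (mZ t k i).
Let Nr t : R := \sum_(k < M) (n k t)%:R.

Let size_sc t w k : size (sc t w k) = n k t.
Proof. by rewrite size_map size_iota. Qed.

Let Ntot_sc t w : Ntot (sc t w) = Nr t.
Proof. by apply: eq_bigr => k _; rewrite size_sc. Qed.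

Let mVc v : measurable (V @^-1` `]-oo, v]).
Proof. by rewrite -[X in measurable X]setTI; apply: mV. Qed.

Let Eeq t k i v : [set w : Omega t | W t k i w <= v] = Z t k i @^-1` (V @^-1` `]-oo, v]).
Proof. by apply/seteqP; split => w /=; rewrite in_itv. Qed.

Let mE t k i v : measurable [set w : Omega t | W t k i w <= v].
Proof. by rewrite Eeq -[X in measurable X]setTI; apply: mZ. Qed.

Let mF t v : (forall k, (1 <= n k t)%N) -> measurable_fun setT (fun w => mix_ecdf (sc t w) v).
Proof.
move=> hn.
apply: (@eq_measurable_fun _ _ _ _ setT (fun w => \sum_(k < M) ((n k t)%:R / Nr t) *
   ((count (fun x => x <= v) (sc t w k))%:R / (n k t)%:R))).
  by move=> w _; rewrite /mix_ecdf Ntot_sc; apply: eq_bigr => k _; rewrite /ecdf size_sc.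
apply: measurable_sum => k; apply: measurable_realfun.measurable_funM; first exact: measurable_cst.
apply: measurable_realfun.measurable_funM; last exact: measurable_cst.
exact: (@mcount R dO (Omega t) (fun i w => V (Z t k i w)) (iota 0 (n k t)) v (fun i => mW t k i)).
Qed.

Lemma L2t t v g : 0 < g -> (forall k, (1 <= n k t)%N) ->
  (forall k, (dTV (Pcal k t) Ptest < (g / 2)%:E)%E) ->
  fine (P t [set w | g <= `|mix_ecdf (sc t w) v - Gf v|]) <= 4 / (Nr t * g ^+ 2).
Proof.
move=> g0 hn htv.
pose J := [seq (k, i) | k <- enum 'I_M, i <- iota 0 (n k t)].
pose E (j : 'I_M * nat) := [set w : Omega t | W t j.1 j.2 w <= v].
have mEj j : measurable (E j) by exact: mE.
have memJ j : j \in J -> (j.2 < n j.1 t)%N.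
  by move=> /allpairsPdep [k [i [_ + ->]]]; rewrite mem_iota add0n.
have uJ : uniq J.
  apply: allpairs_uniq_dep; [exact: enum_uniq | move=> k _; exact: iota_uniq |].
  by move=> [k1 i1] [k2 i2] _ _ /= [e1 e2]; subst.
have Nr0 : 0 < Nr t.
  rewrite /Nr (bigD1 (Ordinal hM)) //= ltr_pwDl ?sumr_ge0 // ltr0n; exact: hn.
have sizeJ : (size J)%:R = Nr t.
  rewrite size_allpairs_dep /Nr -natr_sum; congr (_%:R).
  by rewrite -big_enum /= sumnE big_map; apply: eq_bigr => k _; rewrite size_iota.
have hs w k : (0 < size (sc t w k))%N by rewrite size_sc; exact: hn.
have cntE w : mix_ecdf (sc t w) v = (\sum_(j <- J) \1_(E j) w) / Nr t.
  rewrite mix_ecdfE // Ntot_sc; congr (_ / _).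
  rewrite big_allpairs_dep big_enum /=; apply: eq_bigr => k _.
  rewrite count_map count_sumR; apply: eq_bigr => i _.
  rewrite indicE /=; case: (boolP (V (Z t k i w) <= v)) => h.
    by rewrite mem_set.
  by rewrite memNset //=; apply/negP.
have pj j : j \in J -> `|fine (P t (E j)) - Gf v| < g / 2.
  move=> jJ; rewrite /E Eeq lawZ ?memJ // /Gf.
  have h : (`|Pcal j.1 t (V @^-1` `]-oo, v]) - Ptest (V @^-1` `]-oo, v])| < (g / 2)%:E)%E.
    apply: le_lt_trans (htv j.1); apply: ereal_sup_ubound => /=.
    by exists (V @^-1` `]-oo, v]).
  have f1 : Pcal j.1 t (V @^-1` `]-oo, v]) = (fine (Pcal j.1 t (V @^-1` `]-oo, v])))%:E.
    by rewrite fineK ?fin_num_measure.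
  have f2 : Ptest (V @^-1` `]-oo, v]) = (fine (Ptest (V @^-1` `]-oo, v])))%:E.
    by rewrite fineK ?fin_num_measure.
  by move: h; rewrite f1 f2 -EFinB abse_EFin lte_fin.
have indJ i j : i \in J -> j \in J -> i != j -> P t (E i `&` E j) = (P t (E i) * P t (E j))%E.
  move=> iJ jJ ij.
  have Uij : uniq [:: Some i; Some j].
    by rewrite /= !inE andbT; apply/negP => /eqP [] /eqP; apply/negP.
  have Sij : forall x, x \in [:: Some i; Some j] ->
      [set j | match j with Some ki => (ki.2 < n ki.1 t)%N | None => True end] x.
    by move=> x; rewrite !inE => /orP[] /eqP -> /=; apply: memJ.
  have h := indep t [:: Some i; Some j] Uij Sij (fun _ => V @^-1` `]-oo, v]) (fun _ => mVc v).
  rewrite !big_cons big_nil mule1 /= in h.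
  rewrite /E !Eeq -h; congr (P t _); apply/seteqP; split => w /=.
    move=> [hi hj] x /= /[!inE] /orP[] /eqP -> //=.
  move=> H; split.
    by apply: (H (Some i)); rewrite /= inE eqxx.
  by apply: (H (Some j)); rewrite /= !inE eqxx orbT.
pose e0 := Nr t * g / 2.
have e0p : 0 < e0 by rewrite /e0 divr_gt0 // mulr_gt0.
have := cheb_count e0p uJ mEj indJ.
rewrite sizeJ => hc.
have -> : 4 / (Nr t * g ^+ 2) = Nr t / e0 ^+ 2.
  rewrite /e0; field; apply/andP; split; rewrite gt_eqF //.
apply: le_trans hc; apply: prob_le.
- apply: mset_le; first exact: measurable_cst.
  apply: measurableT_comp; first exact: measurable_realfun.normr_measurable.
  apply: measurable_realfun.measurable_funB; last exact: measurable_cst.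
  exact: mF.
- apply: mset_le; first exact: measurable_cst.
  apply: measurableT_comp; first exact: measurable_realfun.normr_measurable.
  apply: measurable_realfun.measurable_funB; last exact: measurable_cst.
  apply: measurable_sum => j; exact: measurable_realfun.measurable_indic.
move=> w /=; rewrite cntE => H.
set S := \sum_(j <- J) \1_(E j) w in H *.
set Sp := \sum_(j <- J) fine (P t (E j)).
have csum (c : R) : \sum_(j <- J) c = Nr t * c.
  rewrite -sizeJ big_const_seq count_predT.
  by elim: (size J) => [|k IH] /=; rewrite ?mul0r // IH -addn1 natrD mulrDl mul1r addrC.
have hsum : `|Sp - Nr t * Gf v| <= Nr t * g / 2.
  rewrite -csum /Sp -sumrB; apply: (le_trans (ler_norm_sum _ _ _)).
  rewrite -mulrA -csum big_seq [X in _ <= X]big_seq; apply: ler_sum => j jJ.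
  exact: ltW (pj j jJ).
have hH : Nr t * g <= `|S - Nr t * Gf v|.
  have -> : S - Nr t * Gf v = Nr t * (S / Nr t - Gf v) by field; rewrite gt_eqF.
  by rewrite normrM gtr0_norm // ler_pM2l.
have tri := ler_distD Sp S (Nr t * Gf v).
rewrite /e0; lra.
Qed.
Lemma L2 v g del : 0 < g -> 0 < del -> \forall t \near \oo,
  fine (P t [set w | g <= `|mix_ecdf (sc t w) v - Gf v|]) < del.
Proof.
move=> g0 d0.
have H1 := tv (g / 2) (divr_gt0 g0 (ltr0Sn _ 1)).
have H2 : \forall t \near \oo, forall k, (1 <= n k t)%N.
  by apply: filter_forall => k; exact: nInf.
pose K := (Num.trunc (4 / (g ^+ 2 * del))).+1.
have H3 := nInf (Ordinal hM) K.
apply: filterS (filterI H1 (filterI H2 H3)) => t [h1 [h2 h3]].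
apply: le_lt_trans (L2t t v g g0 h2 h1) _.
have hK : 4 / (g ^+ 2 * del) < K%:R by exact: truncnS_gt.
have hN : K%:R <= Nr t.
  apply: le_trans (_ : (n (Ordinal hM) t)%:R <= _); first by rewrite ler_nat.
  by rewrite /Nr (bigD1 (Ordinal hM)) //= lerDl sumr_ge0.
have g2 : 0 < g ^+ 2 by exact: exprn_gt0.
have Np : 0 < Nr t by apply: lt_le_trans hN; rewrite ltr0n.
rewrite ltr_pdivrMr ?mulr_gt0 //.
move: hK; rewrite ltr_pdivrMr ?mulr_gt0 // => hK.
apply: (lt_le_trans hK).
have hgd : 0 < g ^+ 2 * del by rewrite mulr_gt0.
have h : K%:R * (g ^+ 2 * del) <= Nr t * (g ^+ 2 * del) by rewrite ler_pM2r.
by have -> : del * (Nr t * g ^+ 2) = Nr t * (g ^+ 2 * del) by ring.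
Qed.

Let mq t : measurable_fun setT (fun w => agg_threshold alpha (sc t w)).
Proof.
apply: (@eq_measurable_fun _ _ _ _ setT (fun w => \sum_(k < M) ((n k t)%:R / Nr t) *
   order_stat (sc t w k) (qidx alpha (n k t)))).
  by move=> w _; rewrite /agg_threshold Ntot_sc; apply: eq_bigr => k _; rewrite /qlocal size_sc.
apply: measurable_sum => k; apply: measurable_realfun.measurable_funM; first exact: measurable_cst.
exact: (@morder_stat R dO (Omega t) (fun i w => V (Z t k i w)) (iota 0 (n k t)) _ (fun i => mW t k i)).
Qed.

Let mqm t : (forall k, (1 <= n k t)%N) ->
  measurable_fun setT (fun w => mix_quantile alpha (sc t w)).
Proof.
move=> hn; apply: mfun_le => v.
have -> : [set w | mix_quantile alpha (sc t w) <= v] = [set w | 1 - alpha <= mix_ecdf (sc t w) v].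
  apply/seteqP; split => w /=; rewrite mix_quantile_le //.
  - by move=> k; rewrite size_sc; exact: hn.
  - by move=> k; rewrite size_sc; exact: hn.
apply: mset_le; [exact: measurable_cst | exact: mF].
Qed.

Lemma main_cvg :
  (forall e : R, 0 < e ->
     (fun t => fine (P t [set w | e <= `|agg_threshold alpha (sc t w)
                                     - mix_quantile alpha (sc t w)|]))
       @ \oo --> 0) ->
  (fun t => `| fine (P t [set w | (Ztest t w).2 \in
                 Cset V (agg_threshold alpha (sc t w)) (Ztest t w).1])
               - (1 - alpha) |) @ \oo --> 0.
Proof.
move=> hconv; apply/cvgrPdist_le => eps eps0.
have bt0 : 0 < 1 - alpha by case/andP: ha => _ h; rewrite subr_gt0.
have bt1 : 1 - alpha < 1 by case/andP: ha => h _; rewrite ltrBlDr ltrDl.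
have e3 : 0 < eps / 3 by rewrite divr_gt0.
have cd : forall x eta, 0 < eta -> exists2 del, 0 < del &
    forall y, `|x - y| < del -> `|Gf x - Gf y| < eta.
  by move=> x eta eta0; exact: cont_delta.
have mG : {homo Gf : x y / x <= y} by move=> x y; exact: G_mono.
have lo : exists v, Gf v < 1 - alpha by exact: G_lo.
have hi : exists v, 1 - alpha < Gf v by exact: G_hi.
have [a [ea ea0 [Ga Gae]]] := pick_a cd mG lo hi e3.
have [b [eb eb0 [Gb Gbe]]] := pick_b cd mG lo hi e3.
pose e := Num.min ea eb.
have e0 : 0 < e by rewrite lt_min ea0 eb0.
have Gae' : 1 - alpha - eps / 3 < Gf (a - e).
  apply: (lt_le_trans Gae); apply: mG; rewrite lerD2l lerN2 ge_min lexx //.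
have Gbe' : Gf (b + e) < 1 - alpha + eps / 3.
  apply: le_lt_trans Gbe; apply: mG; rewrite lerD2l ge_min lexx orbT //.
have F1 := hconv e e0; move/cvgrPdist_lt: F1 => /(_ _ e3) F1.
have ga : 0 < 1 - alpha - Gf a by rewrite subr_gt0.
have F2 := L2 a (1 - alpha - Gf a) (eps / 3) ga e3.
have gb : 0 < Gf b - (1 - alpha) by rewrite subr_gt0.
have F3 := L2 b (Gf b - (1 - alpha)) (eps / 3) gb e3.
have F4 : \forall t \near \oo, forall k, (1 <= n k t)%N.
  by apply: filter_forall => k; exact: nInf.
apply: filterS (filterI F1 (filterI F2 (filterI F3 F4))) => t [h1 [h2 [h3 hn]]].
pose q w := agg_threshold alpha (sc t w).
pose qm w := mix_quantile alpha (sc t w).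
pose T w := V (Ztest t w).
have mT : measurable_fun setT T := measurableT_comp mV (mZt t).
have hs w k : (0 < size (sc t w k))%N by rewrite size_sc; exact: hn.
have Aeq : [set w | (Ztest t w).2 \in Cset V (q w) (Ztest t w).1] = [set w | T w <= q w].
  apply/seteqP; split => w /=; rewrite /Cset /T; case: (Ztest t w) => x y /=.
    by move/set_mem.
  by move=> h; rewrite mem_set.
rewrite -/q Aeq.
pose A := [set w | T w <= q w].
pose D := [set w | e <= `|q w - qm w|].
pose Ca := [set w | 1 - alpha - Gf a <= `|mix_ecdf (sc t w) a - Gf a|].
pose Cb := [set w | Gf b - (1 - alpha) <= `|mix_ecdf (sc t w) b - Gf b|].
pose Tc c := [set w | T w <= c].
have mA : measurable A by apply: mset_le => //; exact: mq.
have mD : measurable D.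
  apply: mset_le; first exact: measurable_cst.
  apply: measurableT_comp; first exact: measurable_realfun.normr_measurable.
  by apply: measurable_realfun.measurable_funB; [exact: mq|exact: mqm].
have mC v g : measurable [set w | g <= `|mix_ecdf (sc t w) v - Gf v|].
  apply: mset_le; first exact: measurable_cst.
  apply: measurableT_comp; first exact: measurable_realfun.normr_measurable.
  apply: measurable_realfun.measurable_funB; last exact: measurable_cst.
  exact: mF.
have mTc c : measurable (Tc c) by apply: mset_le => //; exact: measurable_cst.
have PT c : fine (P t (Tc c)) = Gf c.
  have -> : Tc c = Ztest t @^-1` (V @^-1` `]-oo, c]).
    by apply/seteqP; split => w /=; rewrite /T in_itv.
  by rewrite lawT.
have up : fine (P t A) <= fine (P t (Tc (b + e))) + fine (P t Cb) + fine (P t D).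
  apply: prob_le3 => //; first exact: mC; move=> w /= Aw.
  have [Dw|Dw] := leP e `|q w - qm w|; first by right.
  have [Cw|Cw] := leP (Gf b - (1 - alpha)) `|mix_ecdf (sc t w) b - Gf b|; first by left; right.
  left; left; rewrite /Tc /=.
  have hF : 1 - alpha <= mix_ecdf (sc t w) b.
    by move/ltr_normlP: Cw => [c1 c2]; lra.
  have hqm : qm w <= b by rewrite /qm mix_quantile_le.
  by move/ltr_normlP: Dw => [d1 d2]; move: Aw; rewrite /A /=; lra.
have low : fine (P t (Tc (a - e))) <= fine (P t A) + fine (P t Ca) + fine (P t D).
  apply: prob_le3 => //; first exact: mC; move=> w /= Tw.
  have [Dw|Dw] := leP e `|q w - qm w|; first by right.
  have [Cw|Cw] := leP (1 - alpha - Gf a) `|mix_ecdf (sc t w) a - Gf a|; first by left; right.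
  left; left; rewrite /A /=.
  have hF : mix_ecdf (sc t w) a < 1 - alpha.
    by move/ltr_normlP: Cw => [c1 c2]; lra.
  have hqm : a < qm w by rewrite ltNge /qm mix_quantile_le // -ltNge.
  by move/ltr_normlP: Dw => [d1 d2]; move: Tw; rewrite /Tc /=; lra.
rewrite PT in up; rewrite PT in low.
move: h1; rewrite sub0r normrN => h1.
have h1' : fine (P t D) < eps / 3 := le_lt_trans (ler_norm _) h1.
have h2' : fine (P t Ca) < eps / 3 := h2.
have h3' : fine (P t Cb) < eps / 3 := h3.
rewrite sub0r normrN normr_id ler_norml; apply/andP; split; lra.
Qed.

End Main.

Unset Implicit Arguments.

Theorem theorem2
  (R : realType) (alpha : R) (M : nat)
  (dX dY : measure_display) (X : measurableType dX) (Y : measurableType dY)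
  (V : X * Y -> R) (Ptest : probability (X * Y)%type R)
  (dO : measure_display) (Omega : nat -> measurableType dO)
  (P : forall t, probability (Omega t) R)
  (n : 'I_M -> nat -> nat)
  (Pcal : 'I_M -> nat -> probability (X * Y)%type R)
  (Z : forall t, 'I_M -> nat -> Omega t -> (X * Y)%type)
  (Ztest : forall t, Omega t -> (X * Y)%type) :
  0 < alpha < 1 ->
  (0 < M)%N ->
  measurable_fun setT V ->
  (* G(v) = P_test(V(X,Y) <= v) is continuous *)
  continuous (fun v : R => fine (Ptest (V @^-1` `]-oo, v]))) ->
  (* all data are random variables *)
  (forall t k i, measurable_fun setT (Z t k i)) ->
  (forall t, measurable_fun setT (Ztest t)) ->
  (* calibration samples of agent k in setting t have law Pcal k t *)
  (forall t k i, (i < n k t)%N -> forall A, measurable A ->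
     P t (Z t k i @^-1` A) = Pcal k t A) ->
  (* the test point has law Ptest *)
  (forall t A, measurable A -> P t (Ztest t @^-1` A) = Ptest A) ->
  (* calibration samples (all agents) and the test point are mutually independent *)
  (forall t, mutually_independent (P t)
     (fun j : option ('I_M * nat) =>
        match j with Some ki => Z t ki.1 ki.2 | None => Ztest t end)
     [set j | match j with Some ki => (ki.2 < n ki.1 t)%N | None => True end]) ->
  (* n_{k,t} -> oo for every k *)
  (forall k (B : nat), \forall t \near \oo, (B <= n k t)%N) ->
  (* sup_k d_TV(Pcal_{k,t}, Ptest) -> 0 *)
  (forall e : R, 0 < e -> \forall t \near \oo,
     forall k, (dTV (Pcal k t) Ptest < e%:E)%E) ->
  (* |q_hat_t - q_mix_t| -> 0 in probability *)
  (let scores t (w : Omega t) (k : 'I_M) :=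
       [seq V (Z t k i w) | i <- iota 0 (n k t)] in
   (forall e : R, 0 < e ->
     (fun t => fine (P t [set w | e <= `|agg_threshold alpha (scores t w)
                                     - mix_quantile alpha (scores t w)|]))
       @ \oo --> 0) ->
   (* conclusion: |P(Y in C_{q_hat_t}(X)) - (1 - alpha)| -> 0 *)
   (fun t => `| fine (P t [set w | (Ztest t w).2 \in
                 Cset V (agg_threshold alpha (scores t w)) (Ztest t w).1])
               - (1 - alpha) |) @ \oo --> 0).
Proof.
Proof.
move=> ha hM mV cG mZ mZt lawZ lawT indep nInf tv scores hconv.
exact: (@main_cvg R alpha M dX dY X Y V Ptest dO Omega P n Pcal Z Ztest ha hM mV cG mZ mZt lawZ lawT indep nInf tv hconv).
Qed.
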